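(* Let $P$ be a poset and $n>1$ an integer. Then for every element $a_0$ of $\mathrm{id}^n(P)$ that is not compact, there is a chain $a_0<a_1<\dots<a_{n-1}$ in $\mathrm{id}^n(P)$ where, for each $i=1,\dots,n-1$, $a_i$ is the least $i$-compact element of $\mathrm{id}^n(P)$ majorizing $a_{i-1}$ (in particular, such a least element exists).
   Context: For a poset $P$, an ideal of $P$ is an upward directed downset of $P$ (downset: $x\le y\in d\Rightarrow x\in d$; upward directed: every two elements have a common upper bound in the set). $\mathrm{id}(P)$ is the set of nonempty ideals of $P$ ordered by inclusion, and $\mathrm{id}^n$ denotes the $n$-fold iterate of this construction. An element $x$ of a poset $Q$ is compact if for every upward directed subset $D\subseteq Q$ which has a least upper bound $\bigvee D$ in $Q$ with $\bigvee D\ge x$, some $y\in D$ satisfies $y\ge x$. The $1$-compact elements of $Q$ are its compact elements; inductively, for $n\ge2$, the $n$-compact elements of $Q$ are those $(n-1)$-compact elements of $Q$ which are compact in the subposet of $(n-1)$-compact elements of $Q$. *)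

(* Defs.v *)
From Stdlib Require Import FunctionalExtensionality PropExtensionality ProofIrrelevance.

Record Poset := {
  car :> Type;
  le : car -> car -> Prop;
  le_refl : forall x, le x x;
  le_trans : forall x y z, le x y -> le y z -> le x z;
  le_antisym : forall x y, le x y -> le y x -> x = y
}.

Arguments le {p} _ _.

Definition lt {P : Poset} (x y : P) : Prop := le x y /\ x <> y.

Definition downset {P : Poset} (d : P -> Prop) : Prop :=
  forall x y, le x y -> d y -> d x.

Definition directed {P : Poset} (D : P -> Prop) : Prop :=
  forall x y, D x -> D y -> exists z, D z /\ le x z /\ le y z.

Definition ideal {P : Poset} (d : P -> Prop) : Prop := downset d /\ directed d.

Definition nonempty_ideal {P : Poset} (d : P -> Prop) : Prop :=
  (exists x, d x) /\ ideal d.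

Definition id_car (P : Poset) : Type := { d : P -> Prop | nonempty_ideal d }.

Definition id_le (P : Poset) (d e : id_car P) : Prop :=
  forall x, proj1_sig d x -> proj1_sig e x.

Lemma id_le_refl (P : Poset) (d : id_car P) : id_le P d d.
Proof. intros x h; exact h. Qed.

Lemma id_le_trans (P : Poset) (d e f : id_car P) :
  id_le P d e -> id_le P e f -> id_le P d f.
Proof. intros h1 h2 x h; apply h2, h1, h. Qed.

Lemma id_le_antisym (P : Poset) (d e : id_car P) :
  id_le P d e -> id_le P e d -> d = e.
Proof.
  destruct d as [d hd], e as [e he]; unfold id_le; simpl; intros h1 h2.
  assert (d = e) as <-.
  { apply functional_extensionality; intro x.
    apply propositional_extensionality; split; auto. }
  f_equal; apply proof_irrelevance.
Qed.

Definition idP (P : Poset) : Poset :=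
  {| car := id_car P; le := id_le P;
     le_refl := id_le_refl P; le_trans := id_le_trans P;
     le_antisym := id_le_antisym P |}.

Definition id_iter (n : nat) (P : Poset) : Poset := Nat.iter n idP P.

Definition is_lub_in {Q : Poset} (S : Q -> Prop) (D : Q -> Prop) (u : Q) : Prop :=
  S u /\ (forall y, D y -> le y u) /\
  (forall v, S v -> (forall y, D y -> le y v) -> le u v).

(* x is compact in the subposet S of Q (directed sets taken nonempty) *)
Definition compact_in {Q : Poset} (S : Q -> Prop) (x : Q) : Prop :=
  S x /\
  forall D : Q -> Prop,
    (forall y, D y -> S y) -> (exists y, D y) -> directed D ->
    forall u, is_lub_in S D u -> le x u -> exists y, D y /\ le x y.

Fixpoint kcompact {Q : Poset} (k : nat) : Q -> Prop :=
  match k with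
  | O => fun _ => True
  | S k' => compact_in (kcompact k')
  end.

Definition compact {Q : Poset} (x : Q) : Prop := kcompact 1 x.

Definition least {Q : Poset} (A : Q -> Prop) (x : Q) : Prop :=
  A x /\ forall y, A y -> le x y.

(* Main.v *)
Require Import Defs.
From Stdlib Require Import Lia.

Lemma emb_inj (Y Z : Poset) (f : Y -> Z) (hf : forall a b, le (f a) (f b) <-> le a b) :
  forall a b, f a = f b -> a = b.
Proof.
  intros a b e; apply le_antisym; apply hf; rewrite e; apply le_refl.
Qed.

Lemma transport (Y Z : Poset) (f : Y -> Z) (hf : forall a b, le (f a) (f b) <-> le a b)
  (SY : Y -> Prop) (SZ : Z -> Prop) (hS : forall z, SZ z <-> exists y, z = f y /\ SY y)
  (z : Z) : compact_in SZ z <-> exists y, z = f y /\ compact_in SY y.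
Proof.
  split.
  - intros [hz hc]. destruct (proj1 (hS z) hz) as [y [-> hy]].
    exists y; split; [reflexivity|]. split; [exact hy|].
    intros D hDS [d0 hd0] hdir u [hu [hub hul]] hyu.
    destruct (hc (fun z => exists d, D d /\ z = f d)) with (u := f u) as [z' [[d [hd ->]] hle]].
    + intros z' [d [hd ->]]. apply hS. exists d; auto.
    + exists (f d0), d0; auto.
    + intros a b [da [ha ->]] [db [hb ->]].
      destruct (hdir da db ha hb) as [c [hc1 [l1 l2]]].
      exists (f c); split; [exists c; auto|]. split; apply hf; auto.
    + split; [apply hS; exists u; auto|]. split.
      * intros z' [d [hd ->]]. apply hf; auto.
      * intros v hv hvub. destruct (proj1 (hS v) hv) as [w [-> hw]].
        apply hf. apply hul; auto. intros y0 hy0. apply hf. apply hvub. exists y0; auto.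
    + apply hf; auto.
    + exists d; split; auto. apply hf; auto.
  - intros [y [-> [hy hc]]]. split; [apply hS; exists y; auto|].
    intros D hDS [d0 hd0] hdir u [hu [hub hul]] hyu.
    assert (hD : forall z, D z -> exists d, z = f d /\ SY d).
    { intros z hz. apply hS, hDS, hz. }
    destruct (proj1 (hS u) hu) as [w [-> hw]].
    destruct (hc (fun y => D (f y))) with (u := w) as [d [hd hle]].
    + intros a ha. destruct (hD _ ha) as [d [e hd]].
      apply (emb_inj Y Z f hf) in e. subst; auto.
    + destruct (hD _ hd0) as [d [-> _]]. exists d; auto.
    + intros a b ha hb. destruct (hdir _ _ ha hb) as [c [hc1 [l1 l2]]].
      destruct (hD _ hc1) as [d [-> _]]. exists d; split; auto. split; apply hf; auto.
    + split; auto. split.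
      * intros a ha. apply hf, hub, ha.
      * intros v hv hvub. apply hf. apply hul.
        -- apply hS; exists v; auto.
        -- intros z hz. destruct (hD _ hz) as [d [-> _]]. apply hf, hvub, hz.
    + apply hf; auto.
    + exists (f d); split; auto. apply hf; auto.
Qed.

Section Layer.
Variable Y : Poset.

Lemma pr_ok (y : Y) : nonempty_ideal (fun x : Y => le x y).
Proof.
  split. exists y; apply le_refl. split.
  - intros a b hab hb; eapply le_trans; eauto.
  - intros a b ha hb; exists y; repeat split; auto using le_refl.
Qed.

Definition pr (y : Y) : idP Y := exist _ (fun x : Y => le x y) (pr_ok y).

Lemma pr_le a b : @le (idP Y) (pr a) (pr b) <-> le a b.
Proof.
  simpl; unfold id_le; simpl; split.
  - intro h; apply h, le_refl.
  - intros h x hx; eapply le_trans; eauto.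
Qed.

Definition uset (D : idP Y -> Prop) : Y -> Prop :=
  fun x => exists e : idP Y, D e /\ proj1_sig e x.

Lemma uset_ok (D : idP Y -> Prop) : (exists e, D e) -> directed D -> nonempty_ideal (uset D).
Proof.
  intros [e he] hd. split.
  - destruct (proj1 (proj2_sig e)) as [x hx]. exists x, e; auto.
  - split.
    + intros a b hab [e' [he' hb]]. exists e'; split; auto.
      exact (proj1 (proj2 (proj2_sig e')) a b hab hb).
    + intros a b [e1 [h1 ha]] [e2 [h2 hb]].
      destruct (hd e1 e2 h1 h2) as [e3 [h3 [l1 l2]]].
      destruct (proj2 (proj2 (proj2_sig e3)) a b (l1 a ha) (l2 b hb)) as [z [hz [az bz]]].
      exists z; split; [exists e3; auto | auto].
Qed.

Definition union (A : idP (idP Y)) : idP Y :=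
  exist _ (uset (proj1_sig A))
    (uset_ok _ (proj1 (proj2_sig A)) (proj2 (proj2 (proj2_sig A)))).

Lemma char0 (x : idP Y) :
  compact_in (fun _ : idP Y => True) x <-> exists y, x = pr y /\ @kcompact Y 0 y.
Proof.
  split.
  - intros [_ hc].
    destruct (hc (fun e : idP Y => exists y, proj1_sig x y /\ e = pr y)) with (u := x)
      as [e [[t [ht ->]] hle]].
    + auto.
    + destruct (proj1 (proj2_sig x)) as [t ht]. exists (pr t), t; auto.
    + intros a b [y1 [h1 ->]] [y2 [h2 ->]].
      destruct (proj2 (proj2 (proj2_sig x)) y1 y2 h1 h2) as [z [hz [l1 l2]]].
      exists (pr z); split; [exists z; auto|]. split; apply pr_le; auto.
    + split; auto. split.
      * intros e [y [hy ->]]. intros t ht. exact (proj1 (proj2 (proj2_sig x)) t y ht hy).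
      * intros v _ hv t ht. apply (hv (pr t)); [exists t; auto|]. simpl. apply le_refl.
    + apply le_refl.
    + exists t; split; [|exact I]. apply le_antisym; auto.
      intros s hs. exact (proj1 (proj2 (proj2_sig x)) s t hs ht).
  - intros [q [-> _]]. split; [exact I|].
    intros D _ hne hdir u [_ [hub hul]] hle.
    pose (W := exist _ (uset D) (uset_ok D hne hdir) : idP Y).
    assert (huW : le u W).
    { apply hul; [exact I|]. intros e he t ht. exists e; auto. }
    assert (hq : proj1_sig W q). { apply huW, hle. simpl. apply le_refl. }
    destruct hq as [e [he hqe]]. exists e; split; auto.
    intros t ht. exact (proj1 (proj2 (proj2_sig e)) t q ht hqe).
Qed.

Lemma char (k : nat) (x : idP Y) :
  @kcompact (idP Y) (S k) x <-> exists y, x = pr y /\ @kcompact Y k y.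
Proof.
  revert x; induction k as [|k IH]; intro x.
  - exact (char0 x).
  - change (compact_in (@kcompact (idP Y) (S k)) x <->
            exists y, x = pr y /\ compact_in (@kcompact Y k) y).
    apply transport; [exact pr_le | exact IH].
Qed.

Lemma pr_compact (y : Y) : @kcompact (idP Y) 1 (pr y).
Proof. apply char. exists y; split; auto. exact I. Qed.
End Layer.
Section Layer2.
Variable Y : Poset.
Arguments pr {Y}.
Arguments union {Y}.

Lemma A_le (A : idP (idP Y)) : le A (pr (union A)).
Proof. intros e he t ht. exists e; auto. Qed.

Lemma A_least (A : idP (idP Y)) (x : idP (idP Y)) :
  @kcompact _ 1 x -> le A x -> le (pr (union A)) x.
Proof.
  intros hx hAx. destruct (proj1 (char (idP Y) 0 x) hx) as [y [-> _]].
  apply pr_le. intros t [e [he ht]]. exact (hAx e he t ht).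
Qed.

Lemma A_neq (A : idP (idP Y)) : ~ @kcompact _ 1 A -> A <> pr (union A).
Proof. intros h e; apply h; rewrite e; apply pr_compact. Qed.

Lemma union_nc (A : idP (idP Y)) : ~ @kcompact _ 1 A -> ~ @kcompact _ 1 (union A).
Proof.
  intros h hU. destruct (proj1 (char Y 0 _) hU) as [t [ht _]].
  assert (htU : proj1_sig (union A) t). { rewrite ht. simpl. apply le_refl. }
  destruct htU as [e [he hte]].
  assert (ee : e = union A).
  { apply le_antisym.
    - intros s hs. exists e; auto.
    - rewrite ht. intros s hs. exact (proj1 (proj2 (proj2_sig e)) s t hs hte). }
  apply h. apply char. exists (union A); split; [|exact I].
  apply le_antisym; [apply A_le|].
  intros f hf. rewrite <- ee in hf.
  exact (proj1 (proj2 (proj2_sig A)) f e hf he).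
Qed.

End Layer2.

Lemma T (k : nat) : forall (X : Poset) (a0 : Nat.iter (S k) idP X), ~ compact a0 ->
  exists a : nat -> Nat.iter (S k) idP X,
    a 0 = a0 /\
    forall i, 1 <= i <= k ->
      lt (a (i - 1)) (a i) /\
      least (fun x => kcompact i x /\ le (a (i - 1)) x) (a i).
Proof.
  induction k as [|k IH]; intros X a0 ha0.
  - exists (fun _ => a0); split; auto. intros i hi; lia.
  - set (Y := Nat.iter k idP X).
    change (car (idP (idP Y))) in a0.
    destruct (IH X (union Y a0) (union_nc Y a0 ha0)) as [b [hb0 hb]].
    exists (fun n => match n with 0 => a0 | S j => pr (idP Y) (b j) end).
    split; [reflexivity|].
    intros i hi. destruct i as [|j]; [lia|].
    replace (S j - 1) with j by lia.
    destruct j as [|j].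
    + simpl. rewrite hb0. split.
      * split; [apply A_le|apply A_neq; exact ha0].
      * split; [split; [apply pr_compact | apply A_le]|].
        intros x [hx hle]. apply A_least; auto.
    + destruct (hb (S j) ltac:(lia)) as [[hl hne] [[hk hle] hleast]].
      replace (S j - 1) with j in * by lia.
      split; [split|].
      * apply pr_le; auto.
      * intro e. apply hne. exact (emb_inj _ _ _ (pr_le _) _ _ e).
      * split.
        -- split; [apply char; exists (b (S j)); auto | apply pr_le; auto].
        -- intros x [hx hx2]. destruct (proj1 (char _ _ x) hx) as [y [-> hy]].
           apply pr_le. apply hleast. split; auto. apply (pr_le (idP Y)); auto.
Qed.

Theorem lemma4p1 (P : Poset) (n : nat) (hn : 1 < n)
  (a0 : id_iter n P) (ha0 : ~ compact a0) :
  exists a : nat -> id_iter n P,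
    a 0 = a0 /\
    forall i, 1 <= i <= n - 1 ->
      lt (a (i - 1)) (a i) /\
      least (fun x => kcompact i x /\ le (a (i - 1)) x) (a i).
Proof.
  destruct n as [|k]; [lia|].
  replace (S k - 1) with k by lia.
  exact (T k P a0 ha0).
Qed.
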